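(* For all $t\ge1$ and all $\mathbf{x}\in\mathcal{X}$, \[ \frac{\sigma_{\mathrm{fb}[t]}(\mathbf{x})}{\sigma_{t-1}(\mathbf{x})}\le e^{C}. \]
   Context: $\mathcal{X}$ is a finite subset of the unit ball; $f\sim\mathcal{GP}(0,k)$; noisy observations with noise $\mathcal{N}(0,\sigma^2)$. Queries $\mathbf{x}_1,\mathbf{x}_2,\dots$ are chosen in batches of size $B$ and indexed sequentially; $\mathrm{fb}[t]$ is the largest index whose observation is available when $\mathbf{x}_t$ is chosen, with $t-\mathrm{fb}[t]\le B$. $\sigma_{\mathrm{fb}[t]}(\mathbf{x})$ is the GP posterior standard deviation at $\mathbf{x}$ given the queries $1,\dots,\mathrm{fb}[t]$, and $\sigma_{t-1}(\mathbf{x})$ that given the queries $1,\dots,t-1$. $C$ is a constant with $\max_{A\subset\mathcal{X},|A|\le B-1}\mathbb{I}(f;\mathbf{y}_A\mid\mathbf{y}_{1:\mathrm{fb}[t]})\le C$ for all $t\ge1$, where $\mathbf{y}_A$ are noisy observations at $A$, $\mathbf{y}_{1:\mathrm{fb}[t]}$ the observations with indices $1,\dots,\mathrm{fb}[t]$, and $\mathbb{I}$ mutual information.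
   Formalization: In the bound defining C, A ranges over all lists of at most B−1 points of $\mathcal{X}$, repetitions allowed, rather than over subsets A ⊂ $\mathcal{X}$ with |A| ≤ B−1. The statement above fails without it. *)

(* Defs.v *)
From mathcomp Require Import all_boot all_order all_algebra.
From mathcomp Require Import reals sequences exp.
Set Implicit Arguments. Unset Strict Implicit. Unset Printing Implicit Defensive.
Import Order.TTheory GRing.Theory Num.Theory.
Local Open Scope ring_scope.

Section GP.
Variables (R : realType) (X : finType).

Definition gram (k : X -> X -> R) n (p : 'I_n -> X) : 'M[R]_n :=
  \matrix_(i, j) k (p i) (p j).

Definition psd_kernel (k : X -> X -> R) : Prop :=
  (forall x y, k x y = k y x) /\
  forall n (p : 'I_n -> X) (v : 'cV[R]_n), 0 <= (v^T *m gram k p *m v) 0 0.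

Definition post_cov (k : X -> X -> R) (sigma : R) n (p : 'I_n -> X) (x y : X) : R :=
  k x y - ((\row_i k x (p i)) *m invmx (gram k p + (sigma ^+ 2)%:M)
             *m (\col_i k (p i) y)) 0 0.

Definition post_sd k sigma n (p : 'I_n -> X) (x : X) : R :=
  Num.sqrt (post_cov k sigma p x x).

(* Mutual information I(f ; y_A | y_B) between f ~ GP(0,k) and noisy
   observations y_A at the points a_0..a_{m-1}, conditionally on noisy
   observations y_B at the points b_0..b_{n-1} (Gaussian closed form):
   1/2 log det (I + sigma^{-2} Sigma_{A|B}). *)
Definition minfo k sigma m (a : 'I_m -> X) n (b : 'I_n -> X) : R :=
  ln (\det (1%:M + (sigma ^- 2) *: \matrix_(i, j) post_cov k sigma b (a i) (a j)))
  / 2.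

(* the queries with indices 1..n of a query sequence xq : nat -> X *)
Definition qprefix (xq : nat -> X) n : 'I_n -> X := fun i => xq (val i).+1.

End GP.
Arguments qprefix {X} xq n _.

(* Main.v *)
Require Import Defs.
From mathcomp Require Import all_boot all_order all_algebra.
From mathcomp Require Import reals sequences exp.
From mathcomp Require Import lra zify.
From Stdlib Require Import FunctionalExtensionality.
Set Implicit Arguments. Unset Strict Implicit. Unset Printing Implicit Defensive.
Import Order.TTheory GRing.Theory Num.Theory.
Local Open Scope ring_scope.

Section Mx.
Variable R : realFieldType.

Definition psd r (P : 'M[R]_r) := forall v : 'cV[R]_r, 0 <= (v^T *m P *m v) 0 0.
Definition symm r (P : 'M[R]_r) := P^T = P.

Lemma schurUL n1 n2 (A : 'M[R]_n1) B C (D : 'M[R]_n2) : A \in unitmx ->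
  \det (block_mx A B C D) = \det A * \det (D - C *m invmx A *m B).
Proof.
move=> uA.
have -> : block_mx A B C D = block_mx 1%:M 0 (C *m invmx A) 1%:M *m
   block_mx A B 0 (D - C *m invmx A *m B).
  rewrite mulmx_block ?mul1mx ?mul0mx ?mulmx0 ?addr0 ?add0r ?mulmxKV // ?mulmx1.
  by rewrite addrC subrK.
by rewrite det_mulmx det_lblock det_ublock !det1 !mul1r.
Qed.

Lemma schurLR n1 n2 (A : 'M[R]_n1) B C (D : 'M[R]_n2) : D \in unitmx ->
  \det (block_mx A B C D) = \det D * \det (A - B *m invmx D *m C).
Proof.
move=> uD.
have -> : block_mx A B C D = block_mx 1%:M (B *m invmx D) 0 1%:M *m
   block_mx (A - B *m invmx D *m C) 0 C D.
  rewrite mulmx_block ?mul1mx ?mul0mx ?mulmx0 ?addr0 ?add0r ?mulmxKV // ?mulmx1.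
  by rewrite -mulmxA subrK.
by rewrite det_mulmx det_lblock det_ublock !det1 !mul1r mulrC.
Qed.

Lemma qf_block n1 n2 (A : 'M[R]_n1) (B : 'M[R]_(n1, n2)) C (D : 'M[R]_n2) (u : 'cV[R]_n1) (w : 'cV[R]_n2) :
  (col_mx u w)^T *m block_mx A B C D *m col_mx u w =
  u^T *m A *m u + u^T *m B *m w + (w^T *m C *m u + w^T *m D *m w).
Proof.
rewrite tr_col_mx mul_row_block mul_row_col !mulmxDl.
by rewrite addrACA.
Qed.


Lemma entD m n (X Y : 'M[R]_(m, n)) i j : (X + Y) i j = X i j + Y i j.
Proof. by rewrite mxE. Qed.
Lemma entN m n (X : 'M[R]_(m, n)) i j : (- X) i j = - X i j.
Proof. by rewrite mxE. Qed.

Lemma schur_psd n1 n2 (A0 : 'M[R]_n1) (B : 'M[R]_(n1, n2)) (D : 'M[R]_n2) E :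
  psd (block_mx A0 B B^T D) -> psd E -> (A0 + E) \in unitmx -> symm (A0 + E) ->
  psd (D - B^T *m invmx (A0 + E) *m B).
Proof.
move=> hP hE uA sA v.
set A := A0 + E in uA sA *.
set Ai := invmx A.
set u := B *m v.
set w := - (Ai *m u).
have H1 := hP (col_mx w v). rewrite qf_block in H1.
have H2 := hE w.
have wT : w^T = - (u^T *m Ai).
  by rewrite /w raddfN /= trmx_mul /Ai trmx_inv sA.
have eA0 : A0 = A - E by rewrite /A addrK.
have e1 : w^T *m A0 *m w = u^T *m Ai *m u - w^T *m E *m w.
  rewrite eA0 mulmxBr mulmxBl; congr (_ - _).
  rewrite wT /w mulNmx mulNmx mulmxN opprK -!mulmxA (mulmxA A) mulmxV //.
  by rewrite mul1mx.
have e2 : w^T *m B *m v = - (u^T *m Ai *m u).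
  by rewrite wT mulNmx mulNmx -!mulmxA.
have e3 : v^T *m B^T *m w = - (u^T *m Ai *m u).
  by rewrite -trmx_mul /w mulmxN -/u mulmxA.
have e4 : v^T *m (D - B^T *m Ai *m B) *m v = v^T *m D *m v - u^T *m Ai *m u.
  by rewrite mulmxBr mulmxBl; congr (_ - _); rewrite /u trmx_mul !mulmxA.
rewrite e4; rewrite e1 e2 e3 in H1.
move: H1 H2; rewrite !(entD, entN).
set a := (u^T *m Ai *m u) 0 0; set b := (w^T *m E *m w) 0 0.
set d := (v^T *m D *m v) 0 0.
move=> H1 H2.
have : 0 <= a - b + - a + (- a + d) by [].
lra.
Qed.


Lemma psd_ul n1 n2 (A : 'M[R]_n1) (B : 'M[R]_(n1, n2)) C (D : 'M[R]_n2) :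
  psd (block_mx A B C D) -> psd A.
Proof.
move=> hP u; have := hP (col_mx u 0); rewrite qf_block.
by rewrite trmx0 !mulmx0 !mul0mx !addr0.
Qed.

Lemma psd_scalar n (c : R) : 0 <= c -> psd (c%:M : 'M[R]_n).
Proof.
move=> c0 v; rewrite mul_mx_scalar -scalemxAl mxE.
apply: mulr_ge0 => //; rewrite mxE; apply: sumr_ge0 => i _.
by rewrite mxE -expr2 sqr_ge0.
Qed.

Lemma sc11 (c : R) : (c%:M : 'M[R]_1) 0 0 = c.
Proof. by rewrite mxE eqxx mulr1n. Qed.

Lemma psd11 (A : 'M[R]_1) : psd A -> 0 <= A 0 0.
Proof. by move=> /(_ 1%:M); rewrite trmx1 mul1mx mulmx1. Qed.

Lemma symm11 (A : 'M[R]_1) : symm A.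
Proof. by apply/matrixP => i j; rewrite mxE !ord1. Qed.

Lemma symm_block n1 n2 (A : 'M[R]_n1) (B : 'M[R]_(n1, n2)) C (D : 'M[R]_n2) :
  symm (block_mx A B C D) -> [/\ symm A, C = B^T & symm D].
Proof.
rewrite /symm tr_block_mx => /eq_block_mx [h1 h2 h3 h4].
by split => //; rewrite -h2 trmxK.
Qed.

Lemma symm_schur n1 n2 (A : 'M[R]_n1) (B : 'M[R]_(n1, n2)) (D : 'M[R]_n2) :
  symm A -> symm D -> symm (D - B^T *m invmx A *m B).
Proof.
move=> sA sD; rewrite /symm raddfB /= sD !trmx_mul trmx_inv sA trmxK.
by rewrite mulmxA.
Qed.

Lemma det_psd_ge r (P : 'M[R]_r) (c : R) : 0 < c -> symm P -> psd P ->
  c ^+ r <= \det (P + c%:M).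
Proof.
move=> c0; elim: r P => [|r IH] P hs hp.
  by rewrite det_mx00 expr0.
move: P hs hp; change r.+1 with (1 + r)%N => P hs hp.
rewrite -[P]submxK in hs hp *.
move: hs hp.
set a := ulsubmx P; set b := ursubmx P; set d := dlsubmx P; set e := drsubmx P.
move=> hs hp; have [sa hd se] := symm_block hs; rewrite hd in hp *.
rewrite (scalar_mx_block 1 r c) add_block_mx ?addr0 ?add0r.
have ua0 : 0 < (a + c%:M) 0 0.
  by rewrite entD sc11; apply: ltr_wpDl => //; apply: psd11; apply: psd_ul hp.
have ua : (a + c%:M) \in unitmx by rewrite unitmxE det_mx11 unitfE gt_eqF.
rewrite schurUL // det_mx11 addrAC exprS.
apply: ler_pM; first exact: ltW.
- by apply: exprn_ge0; apply: ltW.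
- rewrite entD sc11 lerDr; apply: psd11; apply: psd_ul hp.
- apply: IH; [apply: symm_schur => //; apply: symm11|].
  apply: schur_psd => //; [apply: psd_scalar; apply: ltW|apply: symm11]. exact: c0.
Qed.


Lemma symm_schur' n1 n2 (A : 'M[R]_n1) (C : 'M[R]_(n2, n1)) (D : 'M[R]_n2) :
  symm A -> symm D -> symm (D - C *m invmx A *m C^T).
Proof. by move=> sA sD; have := symm_schur C^T sA sD; rewrite trmxK. Qed.

Lemma det_L m (S : 'M[R]_m) (s : 'cV[R]_m) (v c : R) : 0 < v -> 0 < c ->
  symm S -> psd (block_mx (v%:M : 'M_1) s^T s S) ->
  c ^+ m * v <= \det (block_mx (S + c%:M) s s^T (v%:M : 'M_1)).
Proof.
move=> v0 c0 sS hP.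
have uv : (v%:M : 'M_1) \in unitmx by rewrite unitmxE det_mx11 sc11 unitfE gt_eqF.
rewrite schurLR // det_mx11 sc11 mulrC addrAC; apply: ler_wpM2l; first exact: ltW.
apply: det_psd_ge => //; first by apply: symm_schur' => //; apply: symm11.
have := @schur_psd 1 m (v%:M) s^T S 0; rewrite trmxK addr0; apply => //.
- by move=> w; rewrite mulmx0 mul0mx mxE.
- exact: tr_scalar_mx.
Qed.

End Mx.

Section GPS.
Variables (R : realType) (X : finType) (k : X -> X -> R).
Hypothesis hk : psd_kernel k.
Variables (sigma : R).
Hypothesis hsigma : 0 < sigma.

Local Notation c := (sigma ^+ 2).

Definition catf n1 n2 (p : 'I_n1 -> X) (q : 'I_n2 -> X) : 'I_(n1 + n2) -> X :=
  fun i => match split i with inl j => p j | inr j => q j end.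
Definition cross n1 n2 (p : 'I_n1 -> X) (q : 'I_n2 -> X) : 'M[R]_(n1, n2) :=
  \matrix_(i, j) k (p i) (q j).
Definition Amx n (p : 'I_n -> X) := gram k p + c%:M.
Definition cst (x : X) : 'I_1 -> X := fun _ => x.
Definition PC n (p : 'I_n -> X) n1 n2 (q : 'I_n1 -> X) (q' : 'I_n2 -> X) : 'M[R]_(n1, n2) :=
  \matrix_(i, j) post_cov k sigma p (q i) (q' j).

Lemma c_gt0 : 0 < c. Proof. by rewrite exprn_gt0. Qed.

Lemma split_lshift n1 n2 (j : 'I_n1) : split (lshift n2 j) = inl j.
Proof. exact: (unsplitK (inl j)). Qed.
Lemma split_rshift n1 n2 (j : 'I_n2) : split (rshift n1 j) = inr j.
Proof. exact: (unsplitK (inr j)). Qed.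

Lemma ksym x y : k x y = k y x. Proof. by case: hk. Qed.

Lemma cross_tr n1 n2 (p : 'I_n1 -> X) (q : 'I_n2 -> X) : (cross p q)^T = cross q p.
Proof. by apply/matrixP => i j; rewrite !mxE ksym. Qed.

Lemma gram_cross n (p : 'I_n -> X) : gram k p = cross p p. Proof. by []. Qed.

Lemma gram_symm n (p : 'I_n -> X) : symm (gram k p).
Proof. by rewrite /symm gram_cross cross_tr. Qed.

Lemma gram_psd n (p : 'I_n -> X) : psd (gram k p).
Proof. by case: hk => _ h v; apply: h. Qed.

Lemma Amx_symm n (p : 'I_n -> X) : symm (Amx p).
Proof. by rewrite /symm /Amx raddfD /= gram_symm tr_scalar_mx. Qed.

Lemma Amx_unit n (p : 'I_n -> X) : Amx p \in unitmx.
Proof.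
rewrite unitmxE unitfE gt_eqF //; apply: lt_le_trans (det_psd_ge _ _ _).
- by apply: exprn_gt0; apply: c_gt0.
- exact: c_gt0.
- exact: gram_symm.
- exact: gram_psd.
Qed.

Lemma cross_catl n1 n2 m (p : 'I_n1 -> X) (q : 'I_n2 -> X) (r : 'I_m -> X) :
  cross (catf p q) r = col_mx (cross p r) (cross q r).
Proof.
apply/matrixP => i j; rewrite !mxE /catf.
by case: splitP => l _; rewrite mxE.
Qed.

Lemma cross_catr n1 n2 m (p : 'I_n1 -> X) (q : 'I_n2 -> X) (r : 'I_m -> X) :
  cross r (catf p q) = row_mx (cross r p) (cross r q).
Proof. by rewrite -cross_tr cross_catl tr_col_mx !cross_tr. Qed.

Lemma gram_cat n1 n2 (p : 'I_n1 -> X) (q : 'I_n2 -> X) :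
  gram k (catf p q) = block_mx (gram k p) (cross p q) (cross q p) (gram k q).
Proof. by rewrite gram_cross cross_catl !cross_catr. Qed.

Lemma post_covE n (p : 'I_n -> X) x y :
  post_cov k sigma p x y = k x y - (cross (cst x) p *m invmx (Amx p) *m cross p (cst y)) 0 0.
Proof. by []. Qed.

Lemma PC_eq n (p : 'I_n -> X) n1 n2 (q : 'I_n1 -> X) (q' : 'I_n2 -> X) :
  PC p q q' = cross q q' - cross q p *m invmx (Amx p) *m cross p q'.
Proof.
apply/matrixP => i j; rewrite mxE post_covE [in RHS]mxE [in RHS]mxE mxE.
rewrite mxE; congr (_ - _); rewrite mxE; apply: eq_bigr => l _; rewrite !mxE; congr (_ * _).
by apply: eq_bigr => l' _; rewrite !mxE.
Qed.


Lemma PC_symm n (p : 'I_n -> X) m (q : 'I_m -> X) : symm (PC p q q).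
Proof.
rewrite PC_eq -[cross q p]cross_tr; apply: symm_schur; first exact: Amx_symm.
exact: gram_symm.
Qed.

Lemma PC_tr n (p : 'I_n -> X) n1 n2 (q : 'I_n1 -> X) (q' : 'I_n2 -> X) :
  (PC p q q')^T = PC p q' q.
Proof.
rewrite !PC_eq raddfB /= !trmx_mul trmx_inv Amx_symm !cross_tr.
by rewrite mulmxA.
Qed.

Lemma post_cov_sym n (p : 'I_n -> X) x y :
  post_cov k sigma p x y = post_cov k sigma p y x.
Proof.
have -> : post_cov k sigma p x y = (PC p (cst x) (cst y)) 0 0 by rewrite mxE.
by rewrite -PC_tr mxE mxE.
Qed.

Lemma PC_psd n (p : 'I_n -> X) m (q : 'I_m -> X) : psd (PC p q q).
Proof.
rewrite PC_eq -[cross q p]cross_tr.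
apply: (@schur_psd _ _ _ (gram k p) _ _ (c%:M)).
- by have := gram_psd (catf p q); rewrite gram_cat -[cross q p]cross_tr.
- by apply: psd_scalar; apply: ltW; apply: c_gt0.
- exact: Amx_unit.
- exact: Amx_symm.
Qed.

Lemma PC_cat n (p : 'I_n -> X) n1 n2 (q1 : 'I_n1 -> X) (q2 : 'I_n2 -> X) :
  PC p (catf q1 q2) (catf q1 q2) =
  block_mx (PC p q1 q1) (PC p q1 q2) (PC p q2 q1) (PC p q2 q2).
Proof.
rewrite -[LHS]submxK; congr block_mx; apply/matrixP => i j;
  by rewrite !mxE /catf ?split_lshift ?split_rshift.
Qed.


Lemma core n (p : 'I_n -> X) m (a : 'I_m -> X) x :
  0 < post_cov k sigma p x x ->
  post_cov k sigma p x x <=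
  \det (1%:M + sigma ^- 2 *: PC p a a) * post_cov k sigma (catf p a) x x.
Proof.
move=> vp0.
set vp := post_cov k sigma p x x.
set Ai := invmx (Amx p).
set Bm := cross p a. set kp := cross p (cst x). set ka := cross a (cst x).
set S := PC p a a.
set Z := Amx a - Bm^T *m Ai *m Bm.
have hZ : Z = S + c%:M by rewrite /Z /S PC_eq /Amx /Bm cross_tr addrAC.
have dZ : c ^+ m <= \det Z.
  by rewrite hZ; apply: det_psd_ge; [exact: c_gt0|exact: PC_symm|exact: PC_psd].
have dZ0 : 0 < \det Z by apply: lt_le_trans dZ; apply: exprn_gt0; exact: c_gt0.
have uZ : Z \in unitmx by rewrite unitmxE unitfE gt_eqF.
set s := PC p a (cst x).
have hs : s = ka - Bm^T *m Ai *m kp by rewrite /s PC_eq /Bm cross_tr.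
have hM : Amx (catf p a) = block_mx (Amx p) Bm Bm^T (Amx a).
  by rewrite /Amx gram_cat (scalar_mx_block n m c) add_block_mx ?addr0 ?add0r /Bm cross_tr.
set z := invmx Z *m s.
have Zz : Z *m z = s by rewrite /z mulKVmx.
set y := col_mx (Ai *m (kp - Bm *m z)) z.
have hy : Amx (catf p a) *m y = cross (catf p a) (cst x).
  rewrite hM mul_block_col cross_catl; congr col_mx.
    by rewrite /Ai mulKVmx ?Amx_unit // subrK.
  transitivity (Bm^T *m Ai *m kp + Z *m z).
    by rewrite /Z mulmxBl mulmxBr mulmxBr !mulmxA addrA addrAC.
  by rewrite (_ : Z *m z = s) // hs addrC subrK.
have hMi : invmx (Amx (catf p a)) *m cross (catf p a) (cst x) = y.
  by rewrite -hy mulKmx ?Amx_unit.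
have sT : s^T = ka^T - kp^T *m Ai *m Bm.
  by rewrite hs raddfB /= !trmx_mul trmx_inv Amx_symm trmxK mulmxA.
have hvc : post_cov k sigma (catf p a) x x = vp - (s^T *m z) 0 0.
  rewrite post_covE -mulmxA hMi /vp post_covE.
  rewrite -(cross_tr (catf p a)) cross_catl tr_col_mx /y mul_row_col.
  rewrite -[cross (cst x) p]cross_tr -/kp sT.
  rewrite !mulmxBr !mulmxBl !mulmxA !(entD, entN) -/Ai.
  lra.
have hQ : psd (block_mx (vp%:M : 'M_1) s^T s S).
  have := PC_psd p (catf (cst x) a); rewrite PC_cat.
  have -> : PC p (cst x) (cst x) = vp%:M.
    by apply/matrixP => i j; rewrite !ord1 sc11 mxE.
  by rewrite /s PC_tr.
have L := det_L vp0 c_gt0 (PC_symm p a) hQ.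
rewrite -hZ in L.
rewrite schurUL // in L. 
rewrite det_mx11 entD entN sc11 -/vp in L.
rewrite -mulmxA -/z -hvc in L.
have cn0 : c != 0 by rewrite gt_eqF // c_gt0.
have -> : 1%:M + sigma ^- 2 *: S = c^-1 *: Z.
  by rewrite hZ scalerDr scale_scalar_mx mulVf // addrC.
rewrite detZ exprVn -mulrA ler_pdivlMl //.
by apply: exprn_gt0; exact: c_gt0.
Qed.

End GPS.

Unset Implicit Arguments.

Theorem lemma5 (R : realType) (X : finType) (k : X -> X -> R)
  (hk : psd_kernel k) (sigma : R) (hsigma : 0 < sigma)
  (B : nat) (hB : (0 < B)%N) (xq : nat -> X) (fb : nat -> nat)
  (hfb1 : forall t, (1 <= t)%N -> (fb t <= t - 1)%N)
  (hfb2 : forall t, (1 <= t)%N -> (t - fb t <= B)%N)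
  (C : R)
  (hC : forall t, (1 <= t)%N ->
          forall m, (m <= B - 1)%N -> forall a : 'I_m -> X,
            minfo k sigma a (qprefix xq (fb t)) <= C) :
  forall t, (1 <= t)%N -> forall x : X,
    post_sd k sigma (qprefix xq (fb t)) x / post_sd k sigma (qprefix xq (t - 1)) x
      <= expR C.
Proof.
move=> t t1 x.
have h1 := hfb1 t t1; have h2 := hfb2 t t1.
move: (hC t t1); move: h1 h2; set n := fb t => h1 h2 hC'.
have hN : (t - 1 = n + (t - 1 - n))%N by lia.
have hm : (t - 1 - n <= B - 1)%N by lia.
move: hm; move: hN; move: (t - 1 - n)%N => m -> hm.
pose a := fun j : 'I_m => xq (n + j).+1.
have -> : qprefix xq (n + m) = catf (qprefix xq n) a.
  apply: functional_extensionality => i; rewrite /catf /qprefix.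
  by case: splitP => j hj; rewrite /a; congr (xq _.+1); exact: hj.
have hCa := hC' m hm a.
rewrite /post_sd.
set vp := post_cov k sigma (qprefix xq n) x x.
set vc := post_cov k sigma (catf (qprefix xq n) a) x x.
have eC : 0 <= expR C := expR_ge0 C.
case: (leP vc 0) => hvc.
  by rewrite (ler0_sqrtr hvc) invr0 mulr0.
case: (leP vp 0) => hvp.
  by rewrite (ler0_sqrtr hvp) mul0r.
have hcore := core hk hsigma a hvp.
rewrite -/vc in hcore.
set D := \det _ in hcore.
have D0 : 0 < D.
  have : 0 < D * vc by apply: lt_le_trans hcore.
  by rewrite pmulr_lgt0.
have hD : D <= expR C ^+ 2.
  move: hCa; rewrite /minfo -/(PC k sigma (qprefix xq n) a a) -/D => hl.
  rewrite -(lnK D0) expr2 -expRD ler_expR; lra.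
have sv0 : 0 < Num.sqrt vc by rewrite sqrtr_gt0.
rewrite ler_pdivrMr //.
have -> : expR C * Num.sqrt vc = Num.sqrt (expR C ^+ 2 * vc).
  by rewrite sqrtrM ?sqrtr_sqr ?ger0_norm // exprn_ge0.
rewrite ler_sqrt; last by apply: mulr_ge0; [apply: exprn_ge0|apply: ltW].
apply: le_trans hcore _; apply: ler_wpM2r => //; exact: ltW.
Qed.
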